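(* Let $n,N\ge1$ and $r$ be a positive integer with $r\le\lfloor(n-1)/2\rfloor$. Let $\Omega_2=\{y\in\mathbb{R}^{Nn}:\mathrm{rank}(\mathcal{L}(y))\le r\}$, where for $y=(y_1^\top,\dots,y_N^\top)^\top$ with $y_i\in\mathbb{R}^n$, $\mathcal{L}(y)=[\mathcal{H}_{r+1}(y_1)\ \mathcal{H}_{r+1}(y_2)\ \cdots\ \mathcal{H}_{r+1}(y_N)]\in\mathbb{R}^{(r+1)\times N(n-r)}$. Then $\Omega_2$ is prox-regular at every $\bar y\in\Omega_2$ with $\mathrm{rank}(\mathcal{L}(\bar y))=r$.
   Context: For $x\in\mathbb{R}^n$ and $1\le l\le n$, $\mathcal{H}_l(x)\in\mathbb{R}^{l\times(n-l+1)}$ is the Hankel matrix with $(i,j)$ entry $x(i+j-1)$. $N_\Omega(x)$ denotes the limiting normal cone. A closed set $\Omega$ is prox-regular at $\bar x\in\Omega$ for $\bar v\in N_\Omega(\bar x)$ if there exist $\epsilon>0$, $\sigma\ge0$ such that whenever $x\in\Omega$, $v\in N_\Omega(x)$, $\|x-\bar x\|<\epsilon$, $\|v-\bar v\|<\epsilon$, one has $\langle v,y-x\rangle\le\frac\sigma2\|y-x\|^2$ for all $y\in\Omega$ with $\|y-\bar x\|<\epsilon$; $\Omega$ is prox-regular at $\bar x$ if this holds for all $\bar v\in N_\Omega(\bar x)$. *)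

(* Defs.v *)
From HB Require Import structures.
From mathcomp Require Import all_boot all_order all_algebra.
From mathcomp Require Import reals.
Set Implicit Arguments. Unset Strict Implicit. Unset Printing Implicit Defensive.
Import Order.TTheory GRing.Theory Num.Theory.
Local Open Scope ring_scope.

Definition dotv (R : realType) (d : nat) (u v : 'rV[R]_d) : R :=
  \sum_(i < d) u 0 i * v 0 i.
Definition enorm (R : realType) (d : nat) (u : 'rV[R]_d) : R :=
  Num.sqrt (dotv u u).

Definition frechet_normal (R : realType) (d : nat) (Om : 'rV[R]_d -> Prop)
  (x v : 'rV[R]_d) : Prop :=
  Om x /\
  forall eps : R, 0 < eps -> exists2 delta : R, 0 < delta &
    forall x' : 'rV[R]_d, Om x' -> enorm (x' - x) < delta ->
      dotv v (x' - x) <= eps * enorm (x' - x).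

Definition limiting_normal (R : realType) (d : nat) (Om : 'rV[R]_d -> Prop)
  (x v : 'rV[R]_d) : Prop :=
  Om x /\
  exists (xs vs : nat -> 'rV[R]_d),
    (forall k, frechet_normal Om (xs k) (vs k)) /\
    (forall eps : R, 0 < eps -> exists K : nat, forall k, (K <= k)%N ->
        enorm (xs k - x) < eps /\ enorm (vs k - v) < eps).

Definition prox_regular_at_for (R : realType) (d : nat) (Om : 'rV[R]_d -> Prop)
  (xbar vbar : 'rV[R]_d) : Prop :=
  exists eps : R, exists sigma : R, 0 < eps /\ 0 <= sigma /\
    forall x v : 'rV[R]_d, Om x -> limiting_normal Om x v ->
      enorm (x - xbar) < eps -> enorm (v - vbar) < eps ->
      forall y : 'rV[R]_d, Om y -> enorm (y - xbar) < eps ->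
        dotv v (y - x) <= sigma / 2 * enorm (y - x) ^+ 2.

Definition prox_regular_at (R : realType) (d : nat) (Om : 'rV[R]_d -> Prop)
  (xbar : 'rV[R]_d) : Prop :=
  forall vbar, limiting_normal Om xbar vbar -> prox_regular_at_for Om xbar vbar.

(* x(k) with 0-based index k (0 outside range, never used out of range). *)
Definition vat (R : realType) (n : nat) (x : 'rV[R]_n) (k : nat) : R :=
  if insub k is Some k' then x 0 k' else 0.

(* Hankel matrix H_l(x) in R^{l x (n-l+1)}, (i,j) entry x(i+j-1) (1-based),
   i.e. x(i+j) 0-based. *)
Definition hankel (R : realType) (n : nat) (l : nat) (x : 'rV[R]_n)
  : 'M[R]_(l, n - l + 1) :=
  \matrix_(i < l, j < n - l + 1) vat x (i + j).

(* y in R^{N n} split into blocks y_1, ..., y_N of R^n (y = mxvec of the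
   N x n matrix whose i-th row is y_i). *)
Definition yblock (R : realType) (N n : nat) (y : 'rV[R]_(N * n)) (i : 'I_N)
  : 'rV[R]_n := row i (vec_mx y).

Definition Lmap (R : realType) (N n r : nat) (y : 'rV[R]_(N * n)) :=
  \mxrow_(i < N) hankel (r.+1) (yblock y i).

Definition Omega2 (R : realType) (N n r : nat) : 'rV[R]_(N * n) -> Prop :=
  fun y => (\rank (Lmap r y) <= r)%N.

Arguments hankel {R n} l x.
Arguments Lmap {R N n} r y.
Arguments Omega2 {R} N n r _.

(* Main.v *)
Require Import Defs.
From HB Require Import structures.
From mathcomp Require Import all_boot all_order all_algebra.
From mathcomp Require Import reals.
From mathcomp Require Import ring lra zify.
Import Order.TTheory GRing.Theory Num.Theory.
Local Open Scope ring_scope.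
Set Implicit Arguments. Unset Strict Implicit. Unset Printing Implicit Defensive.


Section Norms.
Variable R : realType.

Definition n1 p q (A : 'M[R]_(p,q)) : R := \sum_i \sum_j `|A i j|.

Lemma n1_ge0 p q (A : 'M[R]_(p,q)) : 0 <= n1 A.
Proof. by apply: sumr_ge0 => i _; apply: sumr_ge0. Qed.

Lemma n1D p q (A B : 'M[R]_(p,q)) : n1 (A + B) <= n1 A + n1 B.
Proof.
rewrite /n1 -big_split /=; apply: ler_sum => i _.
rewrite -big_split /=; apply: ler_sum => j _; rewrite mxE; exact: ler_normD.
Qed.

Lemma n1N p q (A : 'M[R]_(p,q)) : n1 (- A) = n1 A.
Proof. by apply: eq_bigr => i _; apply: eq_bigr => j _; rewrite mxE normrN. Qed.

Lemma n1Z p q a (A : 'M[R]_(p,q)) : n1 (a *: A) = `|a| * n1 A.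
Proof.
rewrite /n1 mulr_sumr; apply: eq_bigr => i _; rewrite mulr_sumr.
by apply: eq_bigr => j _; rewrite mxE normrM.
Qed.

Lemma n1B p q (A B : 'M[R]_(p,q)) : n1 (A - B) <= n1 A + n1 B.
Proof. by rewrite -(n1N B); apply: n1D. Qed.

Lemma n1_row p q (A : 'M[R]_(p,q)) i : \sum_j `|A i j| <= n1 A.
Proof.
rewrite /n1 (bigD1 i) //= lerDl; by apply: sumr_ge0 => k _; apply: sumr_ge0.
Qed.

Lemma n1_entry p q (A : 'M[R]_(p,q)) i j : `|A i j| <= n1 A.
Proof.
apply: le_trans (n1_row A i).
rewrite (bigD1 j) //= lerDl; by apply: sumr_ge0.
Qed.

Lemma n1M p q s (A : 'M[R]_(p,q)) (B : 'M[R]_(q,s)) : n1 (A *m B) <= n1 A * n1 B.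
Proof.
rewrite /n1 mulr_suml; apply: ler_sum => i _.
apply: (@le_trans _ _ (\sum_j \sum_k `|A i k| * `|B k j|)).
  apply: ler_sum => j _; rewrite mxE; apply: le_trans (ler_norm_sum _ _ _) _.
  by apply: ler_sum => k _; rewrite normrM.
rewrite exchange_big /= mulr_suml; apply: ler_sum => k _.
rewrite -mulr_sumr; apply: ler_wpM2l => //; exact: n1_row.
Qed.

Lemma n1_bound p q (A : 'M[R]_(p,q)) b :
  (forall i j, `|A i j| <= b) -> n1 A <= (p * q)%:R * b.
Proof.
move=> H; apply: (@le_trans _ _ (\sum_(i < p) \sum_(j < q) b)).
  by apply: ler_sum => i _; apply: ler_sum => j _.
rewrite !sumr_const !card_ord -mulrnA mulr_natl mulnC.
by [].
Qed.

Lemma n1_tr p q (A : 'M[R]_(p,q)) : n1 A^T = n1 A.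
Proof.
rewrite /n1 exchange_big /=; apply: eq_bigr => i _; apply: eq_bigr => j _.
by rewrite mxE.
Qed.

Lemma n1_1 p : n1 (1%:M : 'M[R]_p) = p%:R.
Proof.
rewrite /n1 (eq_bigr (fun _ => 1)) ?sumr_const ?card_ord //.
move=> i _; rewrite (bigD1 i) //= big1 ?mxE ?eqxx ?addr0 ?normr1 //.
by move=> j /negPf; rewrite mxE eq_sym => ->; rewrite normr0.
Qed.

Lemma dotv_mx d (u v : 'rV[R]_d) : dotv u v = (u *m v^T) 0 0.
Proof. by rewrite mxE; apply: eq_bigr => i _; rewrite mxE. Qed.

Lemma dotv_le d (u v : 'rV[R]_d) : `|dotv u v| <= n1 u * n1 v.
Proof.
rewrite dotv_mx; apply: le_trans (n1_entry _ 0 0) _.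
by rewrite -(n1_tr v); apply: n1M.
Qed.

Lemma dotvDr d (u v w : 'rV[R]_d) : dotv u (v + w) = dotv u v + dotv u w.
Proof. by rewrite !dotv_mx linearD /= mulmxDr mxE. Qed.
Lemma dotvDl d (u v w : 'rV[R]_d) : dotv (v + w) u = dotv v u + dotv w u.
Proof. by rewrite !dotv_mx mulmxDl mxE. Qed.
Lemma dotvNr d (u v : 'rV[R]_d) : dotv u (- v) = - dotv u v.
Proof. by rewrite !dotv_mx linearN /= mulmxN mxE. Qed.
Lemma dotvNl d (u v : 'rV[R]_d) : dotv (- v) u = - dotv v u.
Proof. by rewrite !dotv_mx mulNmx mxE. Qed.
Lemma dotvZr d a (u v : 'rV[R]_d) : dotv u (a *: v) = a * dotv u v.
Proof. by rewrite !dotv_mx linearZ /= -scalemxAr mxE. Qed.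

Lemma enorm_ge0 d (u : 'rV[R]_d) : 0 <= enorm u.
Proof. exact: sqrtr_ge0. Qed.

Lemma enorm_le_n1 d (u : 'rV[R]_d) : enorm u <= n1 u.
Proof.
rewrite /enorm -(ger0_norm (n1_ge0 u)) -sqrtr_sqr.
rewrite ler_sqrt ?sqr_ge0 //; apply: le_trans (ler_norm _) _.
by rewrite expr2; apply: dotv_le.
Qed.

Lemma entry_le_enorm d (u : 'rV[R]_d) i : `|u 0 i| <= enorm u.
Proof.
rewrite /enorm -sqrtr_sqr ler_sqrt; last first.
  by apply: sumr_ge0 => j _; rewrite -expr2 sqr_ge0.
rewrite /dotv (bigD1 i) //= expr2 lerDl; apply: sumr_ge0 => j _.
by rewrite -expr2 sqr_ge0.
Qed.

Lemma n1_le_enorm d (u : 'rV[R]_d) : n1 u <= d%:R * enorm u.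
Proof.
apply: le_trans (n1_bound (b := enorm u) _) _.
  by move=> i j; rewrite (ord1 i); apply: entry_le_enorm.
by rewrite mul1n.
Qed.

End Norms.


Section LmapLemmas.
Variable R : realType.

Lemma vat_lin n a (u w : 'rV[R]_n) s : vat (a *: u + w) s = a * vat u s + vat w s.
Proof. by rewrite /vat; case: insubP => [k _ _|_]; rewrite ?mxE ?mulr0 ?addr0. Qed.

Lemma vat_le n (u : 'rV[R]_n) s : `|vat u s| <= n1 u.
Proof.
rewrite /vat; case: insubP => [k _ _|_]; first exact: n1_entry.
by rewrite normr0 n1_ge0.
Qed.

Lemma hankel_lin n l a (u w : 'rV[R]_n) :
  hankel l (a *: u + w) = a *: hankel l u + hankel l w.
Proof. by apply/matrixP => i j; rewrite !mxE vat_lin. Qed.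

Lemma yblock_lin N n a (u w : 'rV[R]_(N * n)) i :
  yblock (a *: u + w) i = a *: yblock u i + yblock w i.
Proof. by apply/rowP => j; rewrite !mxE. Qed.

Lemma n1_yblock N n (u : 'rV[R]_(N * n)) i : n1 (yblock u i) <= (1 * n)%:R * n1 u.
Proof. by apply: n1_bound => a j; rewrite !mxE; apply: n1_entry. Qed.

Lemma yblock_mxvec N n (M : 'M[R]_(N, n)) i : yblock (mxvec M) i = row i M.
Proof. by rewrite /yblock mxvecK. Qed.

Lemma Lmap_lin N n r a (u w : 'rV[R]_(N * n)) :
  Lmap r (a *: u + w) = a *: Lmap r u + Lmap r w.
Proof. by apply/matrixP => i k; rewrite /Lmap !mxE yblock_lin vat_lin. Qed.

Lemma LmapD N n r (u w : 'rV[R]_(N * n)) : Lmap r (u + w) = Lmap r u + Lmap r w.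
Proof. by have := Lmap_lin r 1 u w; rewrite !scale1r. Qed.

Lemma LmapZ N n r a (u : 'rV[R]_(N * n)) : Lmap r (a *: u) = a *: Lmap r u.
Proof.
have L0 : Lmap r (0 : 'rV[R]_(N * n)) = 0.
  apply/matrixP => i k; rewrite /Lmap !mxE /vat; case: insubP => [j _ _|_] //.
  by rewrite !mxE.
by have := Lmap_lin r a u 0; rewrite !addr0 L0 addr0.
Qed.

Lemma LmapN N n r (u : 'rV[R]_(N * n)) : Lmap r (- u) = - Lmap r u.
Proof. by rewrite -scaleN1r LmapZ scaleN1r. Qed.

Lemma LmapB N n r (u w : 'rV[R]_(N * n)) : Lmap r (u - w) = Lmap r u - Lmap r w.
Proof. by rewrite LmapD LmapN. Qed.

Lemma n1_Lmap N n r (u : 'rV[R]_(N * n)) :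
  n1 (Lmap r u) <= (r.+1 * (\sum_(i < N) (n - r.+1 + 1)))%:R * n1 u.
Proof.
apply: n1_bound => i k; rewrite !mxE /vat; case: insubP => [j _ _|_].
  by rewrite !mxE; apply: n1_entry.
by rewrite normr0 n1_ge0.
Qed.

Lemma n1_hankel_block N n r (u : 'rV[R]_(N * n)) i :
  n1 (hankel r.+1 (yblock u i)) <= (r.+1 * (n - r.+1 + 1))%:R * n1 u.
Proof.
apply: n1_bound => a j; rewrite !mxE /vat; case: insubP => [k _ _|_].
  by rewrite !mxE; apply: n1_entry.
by rewrite normr0 n1_ge0.
Qed.

Lemma mul_Lmap N n r (c : 'rV[R]_r.+1) (y : 'rV[R]_(N * n)) :
  c *m Lmap r y = \mxrow_i (c *m hankel r.+1 (yblock y i)).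
Proof. by rewrite /Lmap mul_mxrow. Qed.

End LmapLemmas.


Section Pert.
Variable R : realType.

Lemma n1_eq0 p q (A : 'M[R]_(p,q)) : n1 A <= 0 -> A = 0.
Proof.
move=> H; apply/matrixP => i j; rewrite mxE; apply/eqP; rewrite -normr_le0.
exact: le_trans (n1_entry A i j) H.
Qed.

Lemma n1_0 p q : n1 (0 : 'M[R]_(p,q)) = 0.
Proof. by rewrite /n1 big1 // => i _; rewrite big1 // => j _; rewrite mxE normr0. Qed.

Lemma rank_le_iff k l (A : 'M[R]_(k.+1, l)) :
  (\rank A <= k)%N <-> exists c : 'rV_k.+1, c != 0 /\ c *m A = 0.
Proof.
have E : (\rank A <= k)%N = ~~ row_free A.
  by rewrite /row_free eqn_leq rank_leq_row /= leqNgt.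
rewrite E; split.
  rewrite -kermx_eq0 => /rowV0Pn [v /sub_kermxP vA vnz]; by exists v.
move=> [c [cnz cA]]; apply/negP => fA.
by move: cnz; rewrite -(mulmx_free_eq0 _ fA) cA eqxx.
Qed.

Lemma pert k l (A0 A : 'M[R]_(k,l)) (B0 : 'M[R]_(l,k)) :
  A0 *m B0 = 1%:M -> n1 (A - A0) * n1 B0 <= 2^-1 ->
  forall w : 'rV_k, n1 w <= 2 * n1 B0 * n1 (w *m A).
Proof.
move=> AB H w.
have Ew : w = w *m A *m B0 - w *m (A - A0) *m B0.
  by rewrite -mulmxBl -mulmxBr opprB addrC subrK -mulmxA AB mulmx1.
have H1 : n1 w <= n1 (w *m A) * n1 B0 + n1 w * 2^-1.
  rewrite {1}Ew; apply: le_trans (n1B _ _) _; apply: lerD.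
    exact: n1M.
  apply: le_trans (n1M _ _) _; apply: le_trans (ler_wpM2r (n1_ge0 _) (n1M _ _)) _.
  by rewrite -mulrA ler_wpM2l ?n1_ge0.
have H2 : n1 w * 2^-1 <= n1 (w *m A) * n1 B0.
  lra.
nra.
Qed.

Lemma solve_pert n m (T0 T : 'M[R]_(n, m)) (B0 : 'M[R]_(m, n)) :
  B0 *m T0 = 1%:M -> n1 B0 * n1 (T - T0) * m%:R <= 2^-1 ->
  forall g : 'rV_m, exists e : 'rV_n, e *m T = g /\ n1 e <= 2 * m%:R * n1 B0 * n1 g.
Proof.
move=> BT H g.
pose F := B0 *m T.
have HF : n1 (F - 1%:M) * n1 (1%:M : 'M[R]_m) <= 2^-1.
  rewrite n1_1 /F -BT -mulmxBr; apply: le_trans H.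
  by apply: ler_wpM2r => //; apply: n1M.
have inj := pert (mul1mx 1%:M) HF.
have uF : F \in unitmx.
  rewrite -row_free_unit; apply: inj_row_free => v vF.
  apply: n1_eq0; apply: le_trans (inj v) _.
  by rewrite vF n1_0 mulr0.
exists (g *m invmx F *m B0); split.
  by rewrite -mulmxA -/F -mulmxA mulVmx // mulmx1.
apply: le_trans (n1M _ _) _.
rewrite n1_1 in inj.
have := inj (g *m invmx F); rewrite -mulmxA mulVmx // mulmx1 => Hg.
have := n1_ge0 B0; nra.
Qed.

End Pert.


Section Toep.
Variable R : realType.
Variables n r : nat.
Local Notation m := (n - r.+1 + 1)%N.

Definition Tm (c : 'rV[R]_r.+1) : 'M[R]_(n, m) :=
  \matrix_(a, j) (c *m hankel r.+1 (delta_mx 0 a : 'rV[R]_n)) 0 j.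

Lemma vat_delta (a : 'I_n) s : vat (delta_mx 0 a : 'rV[R]_n) s = (a == s :> nat)%:R.
Proof.
rewrite /vat; case: insubP => [k _ <-|]; first by rewrite mxE eqxx /= eq_sym.
by move=> H; case: eqP => // E; move: H; rewrite -E ltn_ord.
Qed.

Lemma vat_sum (e : 'rV[R]_n) s :
  vat e s = \sum_(a < n) e 0 a * vat (delta_mx 0 a : 'rV[R]_n) s.
Proof.
under eq_bigr => a _ do rewrite vat_delta.
rewrite /vat; case: insubP => [k _ <-|H].
  rewrite (bigD1 k) //= eqxx mulr1 big1 ?addr0 // => a /negPf ak.
  by case: eqP => [/val_inj E|]; [rewrite E eqxx in ak | rewrite mulr0].
rewrite big1 // => a _; case: eqP => [E|]; last by rewrite mulr0.
by move: H; rewrite -E ltn_ord.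
Qed.

Lemma mul_Tm (c : 'rV[R]_r.+1) (e : 'rV[R]_n) : e *m Tm c = c *m hankel r.+1 e.
Proof.
apply/rowP => j; rewrite !mxE.
under eq_bigr => a _ do rewrite !mxE mulr_sumr.
rewrite exchange_big /=; apply: eq_bigr => k _.
rewrite mxE vat_sum mulr_sumr; apply: eq_bigr => a _; rewrite mxE.
by rewrite mulrCA.
Qed.

Lemma Tm_lin a (c c' : 'rV[R]_r.+1) : Tm (a *: c + c') = a *: Tm c + Tm c'.
Proof.
apply/matrixP => i j; rewrite !mxE mulr_sumr -big_split /=; apply: eq_bigr => k _.
by rewrite !mxE mulrDl mulrA.
Qed.

Lemma TmB (c c' : 'rV[R]_r.+1) : Tm c - Tm c' = Tm (c - c').
Proof. by have := Tm_lin (-1) c' c; rewrite !scaleN1r => E; rewrite addrC -E addrC. Qed.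

Lemma n1_Tm (c : 'rV[R]_r.+1) : n1 (Tm c) <= (n * m)%:R * (n1 c * ((r.+1 * m)%:R * 1)).
Proof.
apply: n1_bound => a j; rewrite mxE; apply: le_trans (n1_entry _ 0 j) _.
apply: le_trans (n1M _ _) _; apply: ler_wpM2l; first exact: n1_ge0.
apply: n1_bound => i k; rewrite mxE vat_delta; case: eqP => _; by rewrite ?normr1 ?normr0.
Qed.

Lemma coef_sumX K (f : 'I_K -> R) (i : 'I_K) : (\sum_(j < K) f j *: 'X^j)`_i = f i.
Proof.
rewrite coef_sum (bigD1 i) //= coefZ coefXn eqxx mulr1 big1 ?addr0 // => j ji.
by rewrite coefZ coefXn; case: eqP => [/val_inj E|]; [rewrite E eqxx in ji| rewrite mulr0].
Qed.

Lemma Tm_full (c : 'rV[R]_r.+1) : (r.+1 <= n)%N -> c != 0 -> row_full (Tm c).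
Proof.
move=> rn cnz; rewrite /row_full -mxrank_tr; apply: inj_row_free => v vT.
pose P : {poly R} := \sum_(j < m) v 0 j *: 'X^j.
pose Q : {poly R} := \sum_(k < r.+1) c 0 k *: 'X^k.
have PQ : P * Q = 0.
  apply/polyP => s; rewrite coef0.
  have -> : P * Q = \sum_(j < m) \sum_(k < r.+1) (v 0 j * c 0 k) *: 'X^(j + k).
    rewrite /P /Q mulr_suml; apply: eq_bigr => j _; rewrite mulr_sumr.
    by apply: eq_bigr => k _; rewrite -scalerAl -scalerAr scalerA exprD.
  rewrite coef_sum; case: (ltnP s n) => sn.
    apply: (@eq_trans _ _ ((v *m (Tm c)^T) 0 (Ordinal sn))); last by rewrite vT mxE.
    rewrite mxE; apply: eq_bigr => j _; rewrite !mxE mulr_sumr coef_sum; apply: eq_bigr => k _.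
    by rewrite coefZ coefXn !mxE vat_delta /= (addnC k) mulrA.
  rewrite big1 // => j _; rewrite coef_sum big1 // => k _; rewrite coefZ coefXn.
  have : (j + k < s)%N by have := ltn_ord j; have := ltn_ord k; lia.
  by rewrite ltn_neqAle eq_sym => /andP [/negPf -> _]; rewrite mulr0.
move/eqP: PQ; rewrite mulf_eq0 => /orP [/eqP P0|/eqP Q0].
  by apply/rowP => j; rewrite mxE -(coef_sumX (fun j => v 0 j)) -/P P0 coef0.
move: cnz; case/negP; apply/eqP/rowP => k; rewrite mxE.
by rewrite -(coef_sumX (fun k => c 0 k)) -/Q Q0 coef0.
Qed.

Lemma toep_solve (cb : 'rV[R]_r.+1) : (r.+1 <= n)%N -> cb != 0 ->
  exists kap : R, exists rho : R, 0 <= kap /\ 0 < rho /\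
  forall c : 'rV[R]_r.+1, n1 (c - cb) <= rho ->
  forall g : 'rV[R]_m, exists e : 'rV[R]_n,
    c *m hankel r.+1 e = g /\ n1 e <= kap * n1 g.
Proof.
move=> rn cnz; have /row_fullP [B0 BT] := Tm_full rn cnz.
set CT : R := (n * m)%:R * ((r.+1 * m)%:R * 1).
have CT0 : 0 <= CT by rewrite /CT !mulr_ge0 ?ler0n.
set D : R := n1 B0 * CT * m%:R + 1.
have D1 : 1 <= D by rewrite /D lerDr !mulr_ge0 ?n1_ge0.
exists (2 * m%:R * n1 B0), (2 * D)^-1; split; first by rewrite !mulr_ge0 ?n1_ge0.
split; first by rewrite invr_gt0; lra.
move=> c cc g.
have H : n1 B0 * n1 (Tm c - Tm cb) * m%:R <= 2^-1.
  rewrite TmB; apply: (@le_trans _ _ (n1 B0 * (CT * n1 (c - cb)) * m%:R)).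
    apply: ler_wpM2r => //; apply: ler_wpM2l; first exact: n1_ge0.
    by apply: le_trans (n1_Tm _) _; rewrite /CT -mulrA [n1 _ * _]mulrC.
  have : n1 B0 * CT * m%:R * n1 (c - cb) <= n1 B0 * CT * m%:R * (2 * D)^-1.
    by apply: ler_wpM2l => //; rewrite !mulr_ge0 ?n1_ge0.
  have : n1 B0 * CT * m%:R * (2 * D)^-1 <= 2^-1.
    rewrite ler_pdivrMr; last by lra.
    rewrite /D; lra.
  nra.
have [e [eT eb]] := solve_pert BT H g.
by exists e; split => //; rewrite -mul_Tm.
Qed.

End Toep.


Section Null.
Variable R : realType.
Variables (k l : nat).

Definition Aq (q : 'I_k.+1) (X : 'M[R]_(k.+1, l)) : 'M[R]_(k.+1, l + 1) :=
  row_mx X (delta_mx q 0).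

Lemma mul_delta (c : 'rV[R]_k.+1) q : c *m (delta_mx q 0 : 'M[R]_(k.+1, 1)) = (c 0 q)%:M.
Proof.
apply/matrixP => i j; rewrite (ord1 i) (ord1 j) !mxE (bigD1 q) //= !mxE !eqxx mulr1.
by rewrite big1 ?addr0 // => a /negPf aq; rewrite mxE aq mulr0.
Qed.

Lemma exists_q (X : 'M[R]_(k.+1, l)) : \rank X = k ->
  exists q, row_free (Aq q X).
Proof.
move=> rk.
have Kr : \rank (kermx X) = 1%N by rewrite mxrank_ker rk subSnn.
have : kermx X != 0 by rewrite -mxrank_eq0 Kr.
case/rowV0Pn => cb cbK cbnz.
case/rV0Pn: (cbnz) => q cq.
exists q; apply: inj_row_free => w.
rewrite /Aq mul_mx_row => /eqP; rewrite -row_mx0 => /eqP /eq_row_mx [wX wd].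
have wK : (w <= kermx X)%MS by apply/sub_kermxP.
have Kc : (kermx X <= cb)%MS.
  have := (mxrank_leqif_sup cbK).2; rewrite Kr rank_rV cbnz /= => <-.
  by [].
have /sub_rVP [a wa] := submx_trans wK Kc.
have : w 0 q = 0.
  by have := congr1 (fun M : 'M[R]_1 => M 0 0) wd; rewrite mul_delta !mxE eqxx mulr1n.
subst w; rewrite mxE => /eqP; rewrite mulf_eq0 (negPf cq) orbF => /eqP a0.
by rewrite a0 scale0r.
Qed.

Lemma Aq_diff q (X Y : 'M[R]_(k.+1, l)) : Aq q Y - Aq q X = row_mx (Y - X) 0.
Proof. by rewrite /Aq opp_row_mx add_row_mx subrr. Qed.

Lemma n1_row_mx0 (A : 'M[R]_(k.+1, l)) :
  n1 (row_mx A (0 : 'M[R]_(k.+1, 1))) <= (k.+1 * (l + 1))%:R * n1 A.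
Proof.
apply: n1_bound => i j; rewrite mxE; case: splitP => j' _.
  exact: n1_entry.
by rewrite mxE normr0 n1_ge0.
Qed.

Lemma cAq (c : 'rV[R]_k.+1) q (X : 'M[R]_(k.+1, l)) :
  c *m X = 0 -> c 0 q = 1 -> c *m Aq q X = row_mx 0 1%:M.
Proof. by rewrite /Aq mul_mx_row mul_delta => -> ->. Qed.

Lemma cq_nz (u : 'rV[R]_k.+1) q (X : 'M[R]_(k.+1, l)) K :
  (forall w : 'rV[R]_k.+1, n1 w <= K * n1 (w *m Aq q X)) -> u != 0 -> u *m X = 0 -> u 0 q != 0.
Proof.
move=> inj unz uX; apply/negP => /eqP uq; move/negP: unz; apply; apply/eqP.
apply: n1_eq0; apply: le_trans (inj u) _.
rewrite /Aq mul_mx_row mul_delta uX uq.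
rewrite [X in row_mx _ X](_ : _ = 0); last by apply/matrixP => i j; rewrite !mxE mul0rn.
by rewrite row_mx0 n1_0 mulr0.
Qed.

End Null.


Lemma eps_le (R : realType) (a b S : R) : 0 <= S ->
  (forall e : R, 0 < e -> e <= 1 -> a <= b + e * S) -> a <= b.
Proof.
move=> S0 H; rewrite leNgt; apply/negP => ba.
pose e := Num.min 1 ((a - b) / (S + 1)).
have e0 : 0 < e by rewrite lt_min ltr01 divr_gt0 //; lra.
have e1 : e <= 1 by rewrite ge_min lexx.
have e2 : e <= (a - b) / (S + 1) by rewrite ge_min lexx orbT.
have := H e e0 e1.
have : e * S < a - b.
  apply: (@le_lt_trans _ _ ((a - b) / (S + 1) * S)); first by apply: ler_wpM2r.
  rewrite mulrAC ltr_pdivrMr; last by lra.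
  nra.
lra.
Qed.

Lemma key_alg (R : realType) k l (cx cy : 'rV[R]_k) (Xx Xy XE : 'M[R]_(k, l)) t :
  cx *m Xx = 0 -> cy *m Xy = 0 ->
  (cx + t *: (cy - cx)) *m XE = (1 - t) *: ((cy - cx) *m (Xy - Xx)) ->
  (cx + t *: (cy - cx)) *m (Xx + t *: (Xy - Xx) + t *: XE) = 0.
Proof.
move=> h1 h2 h3.
rewrite mulmxDr -scalemxAr h3 !mulmxDr -!scalemxAr !mulmxBr !mulmxDl -!scalemxAl
  !mulmxBl ?mulmxDr ?mulmxN ?mulNmx ?mulmxN ?opprK h1 h2.
move: (cx *m Xy) (cy *m Xx) => a b.
apply/rowP => j; rewrite !mxE; ring.
Qed.

Lemma mxrowZ' (R : realType) (N m k : nat) (a : R) (B : 'I_N -> 'M[R]_(k, m)) :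
  \mxrow_i (a *: B i) = a *: \mxrow_i B i.
Proof. by apply/matrixP => i j; rewrite !mxE. Qed.

Section Main.
Variables (R : realType) (N n r : nat) (yb : 'rV[R]_(N * n)).
Hypothesis rn : (r.+1 <= n)%N.
Local Notation m := (n - r.+1 + 1)%N.
Local Notation Mc := (\sum_(i < N) m)%N.
Local Notation Om := (Omega2 N n r).

Variable q : 'I_r.+1.
Variable Bb : 'M[R]_(Mc + 1, r.+1).
Hypothesis AB : Aq q (Lmap r yb) *m Bb = 1%:M.

Definition CL : R := (r.+1 * Mc)%:R.
Definition CR : R := (r.+1 * (Mc + 1))%:R * CL.
Definition kA : R := n1 Bb.
Definition rhoA : R := (2 * (kA * CR + 1))^-1.
Definition J : 'rV[R]_(Mc + 1) := row_mx 0 1%:M.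

Lemma CR_ge0 : 0 <= CR.
Proof. by rewrite /CR /CL mulr_ge0 ?ler0n. Qed.
Lemma kA_ge0 : 0 <= kA.
Proof. exact: n1_ge0. Qed.
Lemma rhoA_gt0 : 0 < rhoA.
Proof. rewrite /rhoA invr_gt0; have := CR_ge0; have := kA_ge0; nra. Qed.

Lemma n1_Aq_diff (x y : 'rV[R]_(N * n)) :
  n1 (Aq q (Lmap r y) - Aq q (Lmap r x)) <= CR * n1 (y - x).
Proof.
rewrite Aq_diff -LmapB; apply: le_trans (n1_row_mx0 _) _.
rewrite /CR -mulrA; apply: ler_wpM2l => //; exact: n1_Lmap.
Qed.

Lemma L_inj (x : 'rV[R]_(N * n)) : n1 (x - yb) <= rhoA ->
  forall w : 'rV[R]_r.+1, n1 w <= 2 * kA * n1 (w *m Aq q (Lmap r x)).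
Proof.
move=> hx; apply: pert AB _.
apply: le_trans (ler_wpM2r kA_ge0 (n1_Aq_diff yb x)) _.
have := CR_ge0; have := kA_ge0; have := rhoA_gt0.
have : rhoA * (2 * (kA * CR + 1)) = 1 by rewrite /rhoA mulVf //; have := CR_ge0; have := kA_ge0; nra.
have := n1_ge0 (x - yb); nra.
Qed.

Lemma L_null (x : 'rV[R]_(N * n)) : Om x -> n1 (x - yb) <= rhoA ->
  exists c : 'rV[R]_r.+1, c *m Lmap r x = 0 /\ c 0 q = 1.
Proof.
move=> /rank_le_iff [u [unz uX]] hx.
have uq := @cq_nz R r Mc u q (Lmap r x) (2 * kA) (L_inj hx) unz uX.
exists ((u 0 q)^-1 *: u); split; first by rewrite -scalemxAl uX scaler0.
by rewrite mxE mulVf.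
Qed.

Lemma L_cbound (x : 'rV[R]_(N * n)) (c : 'rV[R]_r.+1) : n1 (x - yb) <= rhoA ->
  c *m Lmap r x = 0 -> c 0 q = 1 -> n1 c <= 2 * kA * n1 J.
Proof. by move=> hx cX cq; apply: le_trans (L_inj hx c) _; rewrite cAq. Qed.

Lemma L_lip (x y : 'rV[R]_(N * n)) (cx cy : 'rV[R]_r.+1) : n1 (x - yb) <= rhoA ->
  cx *m Lmap r x = 0 -> cx 0 q = 1 -> cy *m Lmap r y = 0 -> cy 0 q = 1 ->
  n1 (cx - cy) <= 2 * kA * (n1 cy * (CR * n1 (y - x))).
Proof.
move=> hx cxX cxq cyX cyq; apply: le_trans (L_inj hx _) _.
have -> : (cx - cy) *m Aq q (Lmap r x) = cy *m (Aq q (Lmap r y) - Aq q (Lmap r x)).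
  by rewrite mulmxBl mulmxBr (cAq cxX cxq) (cAq cyX cyq).
apply: ler_wpM2l; first by have := kA_ge0; lra.
apply: le_trans (n1M _ _) _; apply: ler_wpM2l; first exact: n1_ge0.
exact: n1_Aq_diff.
Qed.

Variable cb : 'rV[R]_r.+1.
Hypothesis cbX : cb *m Lmap r yb = 0.
Hypothesis cbq : cb 0 q = 1.
Variables kT rT : R.
Hypothesis kT0 : 0 <= kT.
Hypothesis rT0 : 0 < rT.
Hypothesis TS : forall c : 'rV[R]_r.+1, n1 (c - cb) <= rT ->
  forall g : 'rV[R]_m, exists e : 'rV[R]_n,
    c *m hankel r.+1 e = g /\ n1 e <= kT * n1 g.

Definition CJ : R := 2 * kA * n1 J.
Definition CD : R := 2 * kA * (CJ * CR).
Definition rho : R := Num.min rhoA (rT / (CD + 1)).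
Definition CH : R := (r.+1 * m)%:R.
Definition Ke : R := (1 * (N * n))%:R * (kT * (CD * CH)).

Lemma CD_ge0 : 0 <= CD.
Proof. by rewrite /CD /CJ !mulr_ge0 ?kA_ge0 ?n1_ge0 ?CR_ge0. Qed.
Lemma Ke_ge0 : 0 <= Ke.
Proof.
rewrite /Ke; apply: mulr_ge0; first exact: ler0n.
by apply: mulr_ge0 => //; apply: mulr_ge0; [exact: CD_ge0 | exact: ler0n].
Qed.
Lemma rho_gt0 : 0 < rho.
Proof.
rewrite /rho lt_min rhoA_gt0 /= divr_gt0 //; have := CD_ge0; lra.
Qed.
Lemma rho_le : rho <= rhoA.
Proof. by rewrite /rho ge_min lexx. Qed.
Lemma CD_rho : CD * rho <= rT.
Proof.
have h : rho <= rT / (CD + 1) by rewrite /rho ge_min lexx orbT.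
have C0 := CD_ge0; have r0 := rho_gt0.
have : rho * (CD + 1) <= rT by rewrite -ler_pdivlMr //; lra.
nra.
Qed.

Lemma L_lip2 (x y : 'rV[R]_(N * n)) (cx cy : 'rV[R]_r.+1) :
  n1 (x - yb) <= rhoA -> n1 (y - yb) <= rhoA ->
  cx *m Lmap r x = 0 -> cx 0 q = 1 -> cy *m Lmap r y = 0 -> cy 0 q = 1 ->
  n1 (cx - cy) <= CD * n1 (y - x).
Proof.
move=> hx hy cxX cxq cyX cyq.
apply: le_trans (L_lip hx cxX cxq cyX cyq) _.
have := L_cbound hy cyX cyq; rewrite -/CJ => hc.
apply: (@le_trans _ _ (2 * kA * (CJ * (CR * n1 (y - x))))).
  apply: ler_wpM2l; first by have := kA_ge0; lra.
  by apply: ler_wpM2r => //; apply: mulr_ge0; [exact: CR_ge0 | exact: n1_ge0].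
by rewrite /CD le_eqVlt; apply/orP; left; apply/eqP; ring.
Qed.

Lemma n1_sym (x y : 'rV[R]_(N * n)) : n1 (x - y) = n1 (y - x).
Proof. by rewrite -n1N opprB. Qed.

Lemma frechet_bound (x y v : 'rV[R]_(N * n)) : Om x -> Om y ->
  n1 (x - yb) <= rho -> n1 (y - yb) <= rho -> frechet_normal Om x v ->
  dotv v (y - x) <= Ke * n1 v * n1 (y - x) ^+ 2.
Proof.
move=> Ox Oy hx hy [_ Fr].
have hxA := le_trans hx rho_le; have hyA := le_trans hy rho_le.
have [cx [cxX cxq]] := L_null Ox hxA.
have [cy [cyX cyq]] := L_null Oy hyA.
have ybA : n1 (yb - yb) <= rhoA by rewrite subrr n1_0; have := rhoA_gt0; lra.
set Y := n1 (y - x).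
have Y0 : 0 <= Y by exact: n1_ge0.
have hD : n1 (cy - cx) <= CD * Y.
  by rewrite -n1N opprB /Y; apply: L_lip2.
have hcx : n1 (cx - cb) <= CD * rho.
  apply: le_trans (L_lip2 hxA ybA cxX cxq cbX cbq) _.
  by rewrite n1_sym; apply: ler_wpM2l => //; exact: CD_ge0.
have hcy : n1 (cy - cb) <= CD * rho.
  apply: le_trans (L_lip2 hyA ybA cyX cyq cbX cbq) _.
  by rewrite n1_sym; apply: ler_wpM2l => //; exact: CD_ge0.
set S := Y + Ke * Y ^+ 2.
have S0 : 0 <= S by rewrite /S addr_ge0 // mulr_ge0 ?Ke_ge0 // exprn_ge0.
apply: (@eps_le _ _ _ S S0) => eps e0 e1.
have [del del0 Hdel] := Fr eps e0.
pose t := del / (S + del).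
have t0 : 0 < t by rewrite /t divr_gt0 //; lra.
have t1 : t <= 1 by rewrite /t ler_pdivrMr; lra.
have tS : t * S < del.
  rewrite /t mulrAC ltr_pdivrMr; last by lra.
  nra.
pose c := cx + t *: (cy - cx).
have hc : n1 (c - cb) <= rT.
  have -> : c - cb = (1 - t) *: (cx - cb) + t *: (cy - cb).
    by rewrite /c !scalerBr !scalerBl !scale1r; apply/rowP => j; rewrite !mxE; ring.
  apply: le_trans (n1D _ _) _; rewrite !n1Z !ger0_norm; try lra.
  apply: le_trans CD_rho; have := n1_ge0 (cx - cb); have := n1_ge0 (cy - cb).
  nra.
pose g (i : 'I_N) : 'rV[R]_m := (1 - t) *: ((cy - cx) *m hankel r.+1 (yblock (y - x) i)).
have [es Hes] := fin_all_exists (fun i => TS hc (g i)).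
pose E : 'rV[R]_(N * n) := mxvec (\matrix_(i, j) es i 0 j).
have yE i : yblock E i = es i by rewrite yblock_mxvec; apply/rowP => j; rewrite !mxE.
have hg i : n1 (g i) <= CD * Y * (CH * Y).
  rewrite /g n1Z ger0_norm; last by lra.
  apply: (@le_trans _ _ (n1 ((cy - cx) *m hankel r.+1 (yblock (y - x) i)))).
    have := n1_ge0 ((cy - cx) *m hankel r.+1 (yblock (y - x) i)); nra.
  apply: le_trans (n1M _ _) _.
  apply: ler_pM; rewrite ?n1_ge0 //; exact: n1_hankel_block.
have hE : n1 E <= Ke * Y ^+ 2.
  apply: le_trans (n1_bound (b := kT * (CD * Y * (CH * Y))) _) _.
    move=> i0 k; rewrite (ord1 i0); case/mxvec_indexP: k => i j.
    rewrite mxvecE mxE; apply: le_trans (n1_entry _ 0 j) _.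
    apply: le_trans (proj2 (Hes i)) _; exact: ler_wpM2l.
  by rewrite le_eqVlt; apply/orP; left; apply/eqP; rewrite /Ke expr2; ring.
pose z := x + t *: (y - x) + t *: E.
have Oz : Om z.
  apply/rank_le_iff; exists c; split.
    apply/negP => /eqP c0; have := congr1 (fun M : 'rV[R]_r.+1 => M 0 q) c0.
    by rewrite /c !mxE cxq cyq subrr mulr0 addr0 => /eqP; rewrite oner_eq0.
  rewrite /z !LmapD !LmapZ LmapB; apply: key_alg => //.
  rewrite -/c mul_Lmap -LmapB mul_Lmap -mxrowZ'; apply: eq_mxrow => i.
  by rewrite yE (proj1 (Hes i)).
have zx : z - x = t *: (y - x + E).
  by rewrite /z; apply/rowP => j; rewrite !mxE; ring.
have nz : n1 (z - x) <= t * S.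
  rewrite zx n1Z ger0_norm; last by lra.
  apply: ler_wpM2l; first by lra.
  by apply: le_trans (n1D _ _) _; rewrite /S lerD2l.
have := Hdel z Oz (le_lt_trans (enorm_le_n1 _) (le_lt_trans nz tS)).
rewrite zx dotvZr dotvDr => H1.
have H2 : eps * enorm (t *: (y - x + E)) <= eps * (t * S).
  apply: ler_wpM2l; first by lra.
  by rewrite -zx; apply: le_trans (enorm_le_n1 _) nz.
have H3 : - (n1 v * n1 E) <= dotv v E.
  by have := dotv_le v E; rewrite ler_norml => /andP [h _].
have H4 : n1 v * n1 E <= n1 v * (Ke * Y ^+ 2) by apply: ler_wpM2l; rewrite ?n1_ge0.
have H5 : t * (dotv v (y - x) + dotv v E) <= t * (eps * S).
  by apply: le_trans H1 _; apply: le_trans H2 _; rewrite mulrCA.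
have H6 : dotv v (y - x) + dotv v E <= eps * S by rewrite -(ler_pM2l t0).
rewrite /Y in H4 *; rewrite mulrAC -mulrA [Ke * _]mulrC.
lra.
Qed.

Lemma dotv_split (v vk y x xk : 'rV[R]_(N * n)) :
  dotv v (y - x) = dotv vk (y - xk) + dotv (v - vk) (y - x) + dotv vk (xk - x).
Proof. rewrite /dotv -!big_split; apply: eq_bigr => i _; rewrite !mxE /=; ring. Qed.

Lemma limiting_bound (x y v : 'rV[R]_(N * n)) : n1 (x - yb) < rho -> Om y ->
  n1 (y - yb) <= rho -> limiting_normal Om x v ->
  dotv v (y - x) <= Ke * n1 v * n1 (y - x) ^+ 2.
Proof.
move=> hx Oy hy [Ox [xs [vs [Fr Cv]]]].
set V := n1 v; set Y := n1 (y - x).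
have V0 : 0 <= V by exact: n1_ge0.
have Y0 : 0 <= Y by exact: n1_ge0.
have K0 := Ke_ge0.
set C' := Ke * (V * (2 * Y + 1) + (Y + 1) ^+ 2) + Y + V + 1.
have C0 : 0 <= C'.
  have : 0 <= Ke * (V * (2 * Y + 1) + (Y + 1) ^+ 2).
    by apply: mulr_ge0 => //; apply: addr_ge0; [apply: mulr_ge0; lra | exact: sqr_ge0].
  rewrite /C'; lra.
apply: (@eps_le _ _ _ C' C0) => eta e0 e1.
set gap := rho - n1 (x - yb).
have g0 : 0 < gap by rewrite /gap; lra.
set d : R := (N * n)%:R.
have d0 : 0 <= d by rewrite /d ler0n.
set eta' := Num.min eta gap / (d + 1).
have mg0 : 0 < Num.min eta gap by rewrite lt_min e0 g0.
have et0 : 0 < eta' by rewrite /eta' divr_gt0 //; lra.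
have det : d * eta' <= Num.min eta gap.
  rewrite /eta' mulrA ler_pdivrMr; last by lra.
  nra.
have me : Num.min eta gap <= eta by rewrite ge_min lexx.
have mg : Num.min eta gap <= gap by rewrite ge_min lexx orbT.
have [K HK] := Cv eta' et0.
have [h1 h2] := HK K (leqnn K).
set xk := xs K; set vk := vs K.
set E := n1 (xk - x); set D := n1 (vk - v).
have hE : E <= Num.min eta gap.
  rewrite /E; apply: le_trans (n1_le_enorm _) _; apply: le_trans det.
  by apply: ler_wpM2l => //; apply: ltW.
have hD : D <= eta.
  rewrite /D; apply: le_trans (n1_le_enorm _) _; apply: le_trans me; apply: le_trans det.
  by apply: ler_wpM2l => //; apply: ltW.
have hxk : n1 (xk - yb) <= rho.
  have -> : xk - yb = (xk - x) + (x - yb) by apply/rowP => j; rewrite !mxE; ring.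
  apply: le_trans (n1D _ _) _; rewrite -/E; rewrite /gap in mg; lra.
have [Oxk _] := Fr K.
have FB := frechet_bound Oxk Oy hxk hy (Fr K).
rewrite -/xk -/vk in FB.
have E0 : 0 <= E by exact: n1_ge0.
have D0 : 0 <= D by exact: n1_ge0.
have Ee : E <= eta by apply: le_trans me.
have hvk : n1 vk <= V + D.
  have e : vk = v + (vk - v) by apply/rowP => j; rewrite !mxE; ring.
  by rewrite {1}e; apply: n1D.
have hyk : n1 (y - xk) <= Y + E.
  have e : y - xk = (y - x) - (xk - x) by apply/rowP => j; rewrite !mxE; ring.
  by rewrite e; apply: n1B.
have T1 : dotv (v - vk) (y - x) <= D * Y.
  apply: le_trans (ler_norm _) _; apply: le_trans (dotv_le _ _) _.
  by rewrite /D -n1N opprB.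
have T2 : dotv vk (xk - x) <= n1 vk * E.
  by apply: le_trans (ler_norm _) _; apply: le_trans (dotv_le _ _) _.
have vk0 : 0 <= n1 vk by exact: n1_ge0.
have yk0 : 0 <= n1 (y - xk) by exact: n1_ge0.
have T3 : Ke * n1 vk * n1 (y - xk) ^+ 2 <= Ke * (V + D) * (Y + E) ^+ 2.
  apply: ler_pM.
  - exact: mulr_ge0.
  - exact: exprn_ge0.
  - exact: ler_wpM2l.
  - by apply: lerXn2r; rewrite ?nnegrE //; lra.
have T4 : (V + D) * (Y + E) ^+ 2 <= V * Y ^+ 2 + eta * (V * (2 * Y + 1) + (Y + 1) ^+ 2).
  have a1 : V * (Y + E) ^+ 2 <= V * Y ^+ 2 + eta * (V * (2 * Y + 1)).
    have : E * (2 * Y + E) <= eta * (2 * Y + 1) by apply: ler_pM; lra.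
    rewrite !expr2; nra.
  have a2 : D * (Y + E) ^+ 2 <= eta * (Y + 1) ^+ 2.
    apply: ler_pM; rewrite ?exprn_ge0 //; try lra.
    by apply: lerXn2r; rewrite ?nnegrE //; lra.
  nra.
have T5 : n1 vk * E <= (V + 1) * eta by apply: ler_pM; lra.
rewrite (dotv_split v vk y x xk).
have T6 : Ke * ((V + D) * (Y + E) ^+ 2) <= Ke * (V * Y ^+ 2 + eta * (V * (2 * Y + 1) + (Y + 1) ^+ 2)).
  exact: ler_wpM2l.
rewrite /C'; rewrite mulrA in T6.
have : D * Y <= eta * Y by apply: ler_wpM2r.
nra.
Qed.

End Main.

Unset Implicit Arguments.

Theorem theorem3p3 (R : realType) (n N r : nat) :
  (1 <= n)%N -> (1 <= N)%N -> (0 < r)%N -> (r <= (n - 1)./2)%N ->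
  forall ybar : 'rV[R]_(N * n),
    Omega2 N n r ybar -> \rank (Lmap r ybar) = r ->
    prox_regular_at (Omega2 N n r) ybar.
Proof.
move=> n1p N1 r0 rh yb Oyb rk vbar _.
have rn : (r.+1 <= n)%N.
  have h : ((n - 1)./2 <= n - 1)%N by rewrite leq_half_double; lia.
  lia.
have [q fq] := exists_q rk.
have [Bb AB] := row_freeP fq.
have ybA : n1 (yb - yb) <= rhoA Bb by rewrite subrr n1_0; have := rhoA_gt0 Bb; lra.
have [cb [cbX cbq]] := L_null AB Oyb ybA.
have cbnz : cb != 0.
  apply/negP => /eqP c0; move: cbq; rewrite c0 mxE => /eqP; by rewrite eq_sym oner_eq0.
have [kT [rT [kT0 [rT0 TS]]]] := toep_solve rn cbnz.
set rh0 := rho Bb rT.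
have rh0p : 0 < rh0 by apply: rho_gt0.
set K := Ke Bb kT.
have K0 : 0 <= K by apply: Ke_ge0.
set d : R := (N * n)%:R.
have d0 : 0 <= d by rewrite /d ler0n.
set eps := Num.min 1 (rh0 / (2 * (d + 1))).
have e0 : 0 < eps by rewrite /eps lt_min ltr01 /= divr_gt0 //; lra.
have e1 : eps <= 1 by rewrite /eps ge_min lexx.
have e2 : eps <= rh0 / (2 * (d + 1)) by rewrite /eps ge_min lexx orbT.
have de : d * eps < rh0.
  apply: (@le_lt_trans _ _ (d * (rh0 / (2 * (d + 1))))); first by apply: ler_wpM2l.
  rewrite mulrA ltr_pdivrMr; last by lra.
  nra.
set nb := n1 vbar.
have nb0 : 0 <= nb by exact: n1_ge0.
exists eps, (2 * (K * (nb + d) * d ^+ 2)); split => //; split.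
  apply: mulr_ge0 => //; apply: mulr_ge0; last exact: exprn_ge0.
  by apply: mulr_ge0 => //; lra.
move=> x v Ox LN hx hv y Oy hy.
have hx' : n1 (x - yb) < rh0.
  apply: le_lt_trans (n1_le_enorm _) _; apply: le_lt_trans de.
  by apply: ler_wpM2l => //; apply: ltW.
have hy' : n1 (y - yb) <= rh0.
  apply: le_trans (n1_le_enorm _) _; apply: ltW; apply: le_lt_trans de.
  by apply: ler_wpM2l => //; apply: ltW.
have LB := limiting_bound AB cbX cbq kT0 rT0 TS hx' Oy hy' LN.
have hv' : n1 v <= nb + d.
  have e : v = vbar + (v - vbar) by apply/rowP => j; rewrite !mxE; ring.
  rewrite {1}e; apply: le_trans (n1D _ _) _; rewrite lerD2l.
  apply: le_trans (n1_le_enorm _) _.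
  have : d * enorm (v - vbar) <= d * eps by apply: ler_wpM2l => //; apply: ltW.
  nra.
have hyx : n1 (y - x) <= d * enorm (y - x) by apply: n1_le_enorm.
have Y0 : 0 <= n1 (y - x) by exact: n1_ge0.
have v0 : 0 <= n1 v by exact: n1_ge0.
apply: le_trans LB _.
have T1 : n1 (y - x) ^+ 2 <= (d * enorm (y - x)) ^+ 2.
  by apply: lerXn2r; rewrite ?nnegrE //; lra.
have T2 : K * n1 v * n1 (y - x) ^+ 2 <= K * (nb + d) * (d * enorm (y - x)) ^+ 2.
  apply: ler_pM.
  - exact: mulr_ge0.
  - exact: exprn_ge0.
  - exact: ler_wpM2l.
  - exact: T1.
apply: le_trans T2 _.
rewrite le_eqVlt; apply/orP; left; apply/eqP.
by rewrite exprMn; field.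
Qed.
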